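(* Let $m\ge n\ge1$. Let $\mathcal E=\{\sqrt{p_i}U_i\mid1\le i\le N\}$ with each $U_i$ unitary on $\mathcal H_{2^m}$ and $\sum_ip_i=1$, let $\rho_a$ be an $(m-n)$-qubit density matrix and $\rho_0$ an $m$-qubit density matrix, and suppose $[\mathcal H_{2^n},\mathcal E,\rho_a,\rho_0]$ is a private quantum channel. Then there exist unitaries $U_1',\dots,U_N'$ on $\mathcal H_{2^{n+m}}$ such that, with $\mathcal E'=\{\sqrt{p_i}U_i'\mid1\le i\le N\}$ (the same probabilities $p_i$), $[\mathcal C_{2^{2n}},\mathcal E',\rho_a,\tilde I_{2^n}\otimes\rho_0]$ is a private quantum channel.
   Context: $\mathcal{H}_{2^k}$ denotes the Hilbert space of $k$ qubits, with computational basis $|0\rangle,\dots,|2^k-1\rangle$; $\tilde I_{M}=\frac1M I_M$. $\mathcal C_k=\{|i\rangle\mid 0\le i\le k-1\}$ is the set of the first $k$ computational basis states (so $\mathcal C_{2^{2n}}$ is the set of all $2n$-qubit classical basis states). Definition (private quantum channel, PQC): let $\mathcal S\subseteq\mathcal H_{2^n}$ be a set of pure $n$-qubit states, $\mathcal E=\{\sqrt{p_i}U_i\mid1\le i\le N\}$ with each $U_i$ unitary on $\mathcal H_{2^m}$, $p_i\ge0$, $\sum_ip_i=1$, $\rho_a$ an $(m-n)$-qubit density matrix, and $\rho_0$ an $m$-qubit density matrix. Then $[\mathcal S,\mathcal E,\rho_a,\rho_0]$ is a PQC iff for all $|\phi\rangle\in\mathcal S$, $\sum_{i=1}^Np_iU_i(|\phi\rangle\langle\phi|\otimes\rho_a)U_i^\dagger=\rho_0$.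 (If $m=n$ the ancilla is absent.) *)

(* Defs.v *)
From HB Require Import structures.
From mathcomp Require Import all_boot all_order all_algebra.
From mathcomp Require Import spectral.
From mathcomp Require Import complex mxtens.
From mathcomp Require Import reals.

Set Implicit Arguments.
Unset Strict Implicit.
Unset Printing Implicit Defensive.

Import Order.TTheory GRing.Theory Num.Theory Num.Def.
Local Open Scope ring_scope.
Local Open Scope complex_scope.
Local Open Scope sesquilinear_scope.

Section Quantum.
Variable R : realType.
Local Notation C := (R[i]).

Definition adj {m n} (A : 'M[C]_(m, n)) : 'M[C]_(n, m) := A ^t*.

(* Kronecker tensor product of a k-qubit and an l-qubit operator, seen as a
   (k+l)-qubit operator (standard Kronecker ordering, first factor = high bits). *)
Definition qtens {k l} (A : 'M[C]_(2 ^ k)) (B : 'M[C]_(2 ^ l)) : 'M[C]_(2 ^ (k + l)) :=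
  castmx (esym (expnD 2 k l), esym (expnD 2 k l)) (tensmx A B).

(* positive semidefinite: <v|A|v> >= 0 for all v (ordering of C: real and >= 0) *)
Definition psd {d} (A : 'M[C]_d) : Prop :=
  forall v : 'cV[C]_d, 0 <= (adj v *m A *m v) 0 0.

Definition density {k} (rho : 'M[C]_(2 ^ k)) : Prop :=
  psd rho /\ \tr rho = 1.

Definition pure_state {k} (phi : 'cV[C]_(2 ^ k)) : Prop :=
  (adj phi *m phi) 0 0 = 1.

Definition all_pure_states k : 'cV[C]_(2 ^ k) -> Prop := fun phi => pure_state phi.

Definition first_basis_states k (j : nat) : 'cV[C]_(2 ^ k) -> Prop :=
  fun phi => exists i : 'I_(2 ^ k), (i < j)%N /\ phi = delta_mx i 0.

Definition normalized_id M : 'M[C]_M := (M%:R)^-1%:M.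

(* Private quantum channel [S, E, rho_a, rho_0], E = {sqrt(p_i) U_i},
   S a set of pure n-qubit states, a = number of ancilla qubits,
   U_i unitaries on n + a qubits. *)
Definition PQC n a (S : 'cV[C]_(2 ^ n) -> Prop) N (p : 'I_N -> R)
    (U : 'I_N -> 'M[C]_(2 ^ (n + a))) (rho_a : 'M[C]_(2 ^ a))
    (rho_0 : 'M[C]_(2 ^ (n + a))) : Prop :=
  forall phi, S phi ->
    \sum_(i < N) (p i)%:C *: (U i *m qtens (phi *m adj phi) rho_a *m adj (U i))
    = rho_0.

End Quantum.

Arguments all_pure_states {R} k _.
Arguments first_basis_states {R} k j _.
Arguments normalized_id {R} M.

(* Main.v *)
Require Import Defs.
From HB Require Import structures.
From mathcomp Require Import all_boot all_order all_algebra.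
From mathcomp Require Import spectral.
From mathcomp Require Import complex mxtens.
From mathcomp Require Import reals.
From mathcomp Require Import ring.

Import Order.TTheory GRing.Theory Num.Theory.
Local Open Scope ring_scope.
Local Open Scope sesquilinear_scope.


Lemma tensmxDl (C : comNzRingType) m n p q (A B : 'M[C]_(m,n)) (X : 'M[C]_(p,q)) :
  (A + B) *t X = A *t X + B *t X.
Proof. by apply/matrixP => i j; rewrite !mxE mulrDl. Qed.

Lemma tensmxZl (C : comNzRingType) m n p q c (A : 'M[C]_(m,n)) (X : 'M[C]_(p,q)) :
  (c *: A) *t X = c *: (A *t X).
Proof. by apply/matrixP => i j; rewrite !mxE mulrA. Qed.

Lemma tensmx_suml (C : comNzRingType) m n p q N (F : 'I_N -> 'M[C]_(m,n)) (X : 'M[C]_(p,q)) :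
  (\sum_(i < N) F i) *t X = \sum_(i < N) (F i *t X).
Proof.
apply/matrixP => i j; rewrite !mxE !summxE mulr_suml; apply: eq_bigr => k _.
by rewrite !mxE.
Qed.

Lemma tensmxZr (C : comNzRingType) m n p q c (A : 'M[C]_(m,n)) (X : 'M[C]_(p,q)) :
  A *t (c *: X) = c *: (A *t X).
Proof. by apply/matrixP => i j; rewrite !mxE mulrCA. Qed.

Lemma tensmx_sumr (C : comNzRingType) m n p q N (F : 'I_N -> 'M[C]_(p,q)) (A : 'M[C]_(m,n)) :
  A *t (\sum_(i < N) F i) = \sum_(i < N) (A *t F i).
Proof.
apply/matrixP => i j; rewrite !mxE !summxE mulr_sumr; apply: eq_bigr => k _.
by rewrite !mxE.
Qed.

Lemma adj_tens (C : numClosedFieldType) m n p q (A : 'M[C]_(m,n)) (B : 'M[C]_(p,q)) :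
  (A *t B)^t* = A^t* *t B^t*.
Proof. by apply/matrixP => i j; rewrite !mxE rmorphM. Qed.

Lemma tens11 (C : comNzRingType) m n :
  (1%:M : 'M[C]_m) *t (1%:M : 'M[C]_n) = 1%:M.
Proof.
apply/matrixP => i j.
case: (mxtens_indexP i) => a b; case: (mxtens_indexP j) => a' b'.
rewrite tensmxE !mxE (can_eq (@mxtens_indexK _ _)) xpair_eqE.
by case: (a == a'); case: (b == b'); rewrite ?mulr1 ?mulr0.
Qed.

Lemma tens_unitary (C : numClosedFieldType) m n (A : 'M[C]_m) (B : 'M[C]_n) :
  A \is unitarymx -> B \is unitarymx -> A *t B \is unitarymx.
Proof.
move=> /unitarymxP hA /unitarymxP hB; apply/unitarymxP.
by rewrite adj_tens tensmx_mul hA hB tens11.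
Qed.

Lemma tensmxA (C : comNzRingType) m1 n1 m2 n2 m3 n3 (A : 'M[C]_(m1,n1))
  (B : 'M[C]_(m2,n2)) (X : 'M[C]_(m3,n3)) (em : (m1 * (m2 * m3) = m1 * m2 * m3)%N)
  (en : (n1 * (n2 * n3) = n1 * n2 * n3)%N) :
  castmx (em, en) (A *t (B *t X)) = (A *t B) *t X.
Proof.
apply/matrixP => i j.
case: (mxtens_indexP i) => i12 c; case: (mxtens_indexP i12) => a b.
case: (mxtens_indexP j) => j12 c'; case: (mxtens_indexP j12) => a' b'.
rewrite castmxE !tensmxE.
have -> : cast_ord (esym (em, en).1) (mxtens_index (mxtens_index (a, b), c)) =
  mxtens_index (a, mxtens_index (b, c)).
  by apply: val_inj => /=; rewrite mulnDl -mulnA addnA.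
have -> : cast_ord (esym (em, en).2) (mxtens_index (mxtens_index (a', b'), c')) =
  mxtens_index (a', mxtens_index (b', c')).
  by apply: val_inj => /=; rewrite mulnDl -mulnA addnA.
by rewrite !tensmxE mulrA.
Qed.

Lemma sum_tens (C : nmodType) m n (F : 'I_(m * n) -> C) :
  \sum_(x < m * n) F x = \sum_(i < m) \sum_(j < n) F (mxtens_index (i, j)).
Proof.
rewrite pair_big /=; apply: reindex => /=.
exists (@mxtens_unindex m n) => x _. by rewrite -surjective_pairing mxtens_indexK. by rewrite -surjective_pairing mxtens_unindexK.
Qed.

Lemma castmx_mulsq (C : pzRingType) m m' (e : m = m') (A B : 'M[C]_m) :
  castmx (e,e) (A *m B) = castmx (e,e) A *m castmx (e,e) B.
Proof. by case: m' / e. Qed.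

Lemma castmx_adj (C : numClosedFieldType) m m' n n' (e : m = m') (f : n = n') (A : 'M[C]_(m,n)) :
  castmx (f,e) (A^t*) = (castmx (e,f) A)^t*.
Proof. by case: m' / e; case: n' / f. Qed.

Lemma castmx_sumZ (C : pzRingType) m m' n n' N (e : m = m') (f : n = n') (q : 'I_N -> C) (F : 'I_N -> 'M[C]_(m,n)) :
  castmx (e,f) (\sum_(j < N) q j *: F j) = \sum_(j < N) q j *: castmx (e,f) (F j).
Proof. by case: m' / e; case: n' / f. Qed.

Lemma castmx_unitary (C : numClosedFieldType) m m' (e : m = m') (A : 'M[C]_m) :
  A \is unitarymx -> castmx (e,e) A \is unitarymx.
Proof. by case: m' / e. Qed.

Lemma castmx_pi (C : Type) m m' n n' (e e' : (m = m') * (n = n')) (A : 'M[C]_(m,n)) :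
  castmx e A = castmx e' A.
Proof.
case: e e' => e1 e2 [e1' e2'].
by rewrite (eq_irrelevance e1 e1') (eq_irrelevance e2 e2').
Qed.

Lemma castmx_tens (C : pzRingType) m m' n n' p p' q q' (e1 : m = m') (e2 : n = n')
  (e3 : p = p') (e4 : q = q') (f : ((m * p = m' * p')%N * (n * q = n' * q')%N)%type)
  (A : 'M[C]_(m,n)) (B : 'M[C]_(p,q)) :
  castmx (e1,e2) A *t castmx (e3,e4) B = castmx f (A *t B).
Proof.
case: m' / e1 f; case: n' / e2; case: p' / e3; case: q' / e4 => f.
by rewrite (@castmx_pi _ _ _ _ _ f (erefl, erefl)) !castmx_id.
Qed.

Lemma castmx_delta (C : pzRingType) m m' (e : m = m') (i : 'I_m) :
  castmx (e, erefl 1%N) (delta_mx i 0 : 'cV[C]_m) = delta_mx (cast_ord e i) 0.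
Proof. by case: m' / e; rewrite castmx_id cast_ord_id. Qed.

Definition Lam (C : numClosedFieldType) N d D (q : 'I_N -> C) (V : 'I_N -> 'M[C]_(d * D)%N)
  (rho : 'M[C]_D) (X : 'M[C]_d) : 'M[C]_(d * D)%N :=
  \sum_(j < N) q j *: (V j *m (X *t rho) *m (V j)^t*).
Arguments Lam {C N d D}.

Lemma LamD (C : numClosedFieldType) N d D q V rho (X Y : 'M[C]_d) :
  @Lam C N d D q V rho (X + Y) = Lam q V rho X + Lam q V rho Y.
Proof.
rewrite /Lam -big_split /=; apply: eq_bigr => j _.
by rewrite tensmxDl mulmxDr mulmxDl scalerDr.
Qed.

Lemma LamZ (C : numClosedFieldType) N d D q V rho c (X : 'M[C]_d) :
  @Lam C N d D q V rho (c *: X) = c *: Lam q V rho X.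
Proof.
rewrite /Lam scaler_sumr; apply: eq_bigr => j _.
by rewrite tensmxZl -scalemxAr -scalemxAl !scalerA mulrC.
Qed.

Lemma adj_delta (C : numClosedFieldType) m n (i : 'I_m) (j : 'I_n) :
  (delta_mx i j : 'M[C]_(m,n))^t* = delta_mx j i.
Proof. by rewrite trmx_delta map_delta_mx. Qed.

Import Num.Def.

Lemma adj_comb (C : numClosedFieldType) m n c z (A B : 'M[C]_(m,n)) :
  (c *: (A + z *: B))^t* = c^* *: (A^t* + z^* *: B^t*).
Proof. by rewrite !linearZ /= !linearD /= linearZ /= map_mxD !map_mxZ. Qed.

Lemma polar (C : numClosedFieldType) N d D (q : 'I_N -> C) V rho sigma :
  (forall phi : 'cV[C]_d, (phi^t* *m phi) 0 0 = 1 -> Lam q V rho (phi *m phi^t*) = sigma) ->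
  forall u v : 'I_d, @Lam C N d D q V rho (delta_mx u v) = (u == v)%:R *: sigma.
Proof.
move=> hP.
have hdiag : forall u, Lam q V rho (delta_mx u u) = sigma.
  move=> u; rewrite -(mul_delta_mx (0 : 'I_1)) -(@adj_delta C _ _ u (0 : 'I_1)).
  by apply: hP; rewrite adj_delta mul_delta_mx mxE !eqxx.
move=> u v; case: eqVneq => [<-|huv]; first by rewrite scale1r hdiag.
rewrite scale0r.
set c := sqrtC (2^-1 : C).
have hc : c^* * c = 2^-1.
  rewrite geC0_conj ?sqrtC_ge0 ?invr_ge0 ?ler0n // -expr2 sqrtCK //.
have key : forall z : C, z^* * z = 1 ->
    z^* *: Lam q V rho (delta_mx u v) + z *: Lam q V rho (delta_mx v u) = 0.
  move=> z hz.
  set phi := c *: (delta_mx u 0 + z *: delta_mx v 0) : 'cV[C]_d.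
  have hnorm : (phi^t* *m phi) = 1.
    rewrite /phi adj_comb !adj_delta -scalemxAl -scalemxAr scalerA hc.
    rewrite !mulmxDl !mulmxDr -!scalemxAl -!scalemxAr !mul_delta_mx_cond.
    rewrite eqxx (negbTE huv) eq_sym (negbTE huv) !mulr1n !mulr0n !scaler0 !addr0 scalerA hz.
    rewrite eqxx mulr1n add0r scale1r; apply/matrixP => i j.
    rewrite !ord1 !mxE /= -[1 + 1]/(2%:R) mulVf //.
    by rewrite pnatr_eq0.
  have hphi : phi *m phi^t* = 2^-1 *: (delta_mx u u + z^* *: delta_mx u v
     + z *: delta_mx v u + delta_mx v v).
    rewrite /phi adj_comb !adj_delta -scalemxAl -scalemxAr scalerA mulrC hc.
    rewrite !mulmxDl !mulmxDr -!scalemxAl -!scalemxAr !mul_delta_mx.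
    by rewrite !scalerA mulrC hz scale1r !addrA.
  have := hP phi; rewrite hnorm mxE eqxx => /(_ erefl).
  rewrite hphi LamZ !LamD !LamZ !hdiag => h.
  move/(congr1 (fun M => 2%:R *: M)): h.
  rewrite scalerA mulfV ?pnatr_eq0 // scale1r scaler_nat mulr2n.
  rewrite -(addrA sigma) (addrC _ sigma) addrA => h.
  by apply: (addrI (sigma + sigma)); rewrite addr0.
have := key 1; rewrite conjC1 mulr1 !scale1r => /(_ erefl) k1.
have := key 'i; rewrite conjCi mulNr -expr2 sqrCi opprK => /(_ erefl) k2.
move: k1 => /eqP; rewrite addr_eq0 => /eqP ha.
move: k2 => /eqP; rewrite ha scalerN scaleNr opprK -scalerDl.
rewrite scalemx_eq0 -mulr2n mulrn_eq0 /= (negbTE (@neq0Ci C)) /= => /eqP ->.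
by rewrite oppr0.
Qed.

Lemma unitary1 (C : numClosedFieldType) m : (1%:M : 'M[C]_m) \is unitarymx.
Proof. by apply/unitarymxP; rewrite trmx1 map_mx1 mulmx1. Qed.

Definition H1 (C : numClosedFieldType) : 'M[C]_2 :=
  sqrtC (2^-1) *: \matrix_(i < 2, j < 2) (if (i == 1) && (j == 1) then -1 else 1).

Lemma H1_unitary (C : numClosedFieldType) : H1 C \is unitarymx.
Proof.
have hc : sqrtC (2^-1 : C) * (sqrtC (2^-1))^* = 2^-1.
  by rewrite geC0_conj ?sqrtC_ge0 ?invr_ge0 ?ler0n // -expr2 sqrtCK.
apply/unitarymxP/matrixP => i j; rewrite !mxE !big_ord_recl big_ord0 !mxE /=.
rewrite !rmorphM /= !mulrA.
have e : forall a b : C, sqrtC 2^-1 * a * conjC (sqrtC 2^-1) * b = 2^-1 * (a * b).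
  by move=> a b; rewrite (mulrAC _ a) hc -mulrA.
rewrite !e addr0 -mulrDr.
case: i => [[|[|//]]] hi; case: j => [[|[|//]]] hj; rewrite /= ?rmorphN1 ?conjC1 ?mulr1 ?mulrN1 ?opprK.
all: by rewrite ?subrr ?mulr0 // -[1 + 1]/(2%:R) mulVf // pnatr_eq0.
Qed.

Lemma H1_entry (C : numClosedFieldType) i j : H1 C i j * (H1 C i j)^* = 2^-1.
Proof.
have hc : sqrtC (2^-1 : C) * (sqrtC (2^-1))^* = 2^-1.
  by rewrite geC0_conj ?sqrtC_ge0 ?invr_ge0 ?ler0n // -expr2 sqrtCK.
rewrite !mxE rmorphM /= mulrACA hc.
by case: ifP; rewrite ?rmorphN1 ?conjC1 ?mulr1 // mulrN1 opprK mulr1.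
Qed.

Lemma hadamard (C : numClosedFieldType) n : exists H : 'M[C]_(2 ^ n),
  H \is unitarymx /\ forall i j, H i j * (H i j)^* = ((2 ^ n)%:R)^-1.
Proof.
elim: n => [|n [H [hu he]]].
  have e : 1%N = (2 ^ 0)%N by [].
  exists (castmx (e, e) 1%:M); split; first exact/castmx_unitary/unitary1.
  by move=> i j; rewrite castmxE !ord1 mxE eqxx conjC1 mulr1 expn0 invr1.
exists (castmx (esym (expnS 2 n), esym (expnS 2 n)) (H1 C *t H)); split.
  exact/castmx_unitary/tens_unitary/hu/H1_unitary.
move=> i j; rewrite castmxE /=.
rewrite -[cast_ord _ i]mxtens_unindexK -[cast_ord _ j]mxtens_unindexK.
move: (mxtens_unindex (cast_ord _ i)) (mxtens_unindex (cast_ord _ j)) => [a b] [a' b'].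
by rewrite tensmxE rmorphM /= mulrACA H1_entry he expnS natrM invfM.
Qed.

Definition Bmx (C : numClosedFieldType) d' (H : 'M[C]_(d'.+1)) : 'M[C]_(d'.+1 * d'.+1) :=
  \matrix_(r, x) (H (mxtens_unindex r).1 (mxtens_unindex x).1 *
     ((mxtens_unindex r).2 == (mxtens_unindex r).1 + (mxtens_unindex x).2)%:R).
Arguments Bmx {C d'}.

Lemma sum_pick (C : numClosedFieldType) d' (a c : 'I_(d'.+1)) (F : 'I_(d'.+1) -> C) :
  \sum_(x2 < d'.+1) (c == a + x2)%:R * F x2 = F (c - a).
Proof.
rewrite (bigD1 (c - a)) //= (addrC a) subrK eqxx mul1r big1 ?addr0 // => x hx.
rewrite (_ : (c == a + x) = false) ?mul0r //; apply/negbTE; apply: contra hx.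
by move=> /eqP ->; rewrite (addrC a) addrK.
Qed.

Lemma B_unitary (C : numClosedFieldType) d' (H : 'M[C]_(d'.+1)) :
  H \is unitarymx -> Bmx H \is unitarymx.
Proof.
move=> /unitarymxP hH; apply/unitarymxP/matrixP => r s.
case: (mxtens_indexP r) => a c; case: (mxtens_indexP s) => b c'.
rewrite !mxE sum_tens.
under eq_bigr => x1 _ do under eq_bigr => x2 _ do rewrite !mxE !mxtens_indexK /=.
under eq_bigr => x1 _ do under eq_bigr => x2 _ do rewrite rmorphM /= conjC_nat mulrACA mulrCA.
under eq_bigr => x1 _ do rewrite sum_pick.
rewrite -mulr_suml.
have -> : \sum_x1 H a x1 * conjC (H b x1) = (a == b)%:R.
  by move/matrixP: hH => /(_ a b); rewrite !mxE => <-; apply: eq_bigr => k _; rewrite !mxE.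
rewrite (can_eq (@mxtens_indexK _ _)) xpair_eqE.
case: eqVneq => [->|_]; last by rewrite mul0r.
by rewrite mul1r (addrC b) subrK eq_sym.
Qed.

Lemma mul_delta_entry (C : pzRingType) m n p q (A : 'M[C]_(m,n)) (B : 'M[C]_(p,q)) i j r s :
  (A *m delta_mx i j *m B) r s = A r i * B j s.
Proof.
rewrite -(mul_delta_mx (0 : 'I_1)) mulmxA -colE -mulmxA -rowE mxE big_ord1.
by rewrite !mxE.
Qed.

Definition Gmx (C : numClosedFieldType) d' (H : 'M[C]_(d'.+1)) (x1 x2 : 'I_(d'.+1)) :
  'M[C]_(d'.+1 * d'.+1) :=
  \sum_(a < d'.+1) \sum_(b < d'.+1)
    (H a x1 * (H b x1)^*) *: (delta_mx a b *t delta_mx (a + x2) (b + x2)).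
Arguments Gmx {C d'}.

Lemma BXB (C : numClosedFieldType) d' (H : 'M[C]_(d'.+1)) x1 x2 :
  Bmx H *m delta_mx (mxtens_index (x1, x2)) (mxtens_index (x1, x2)) *m (Bmx H)^t*
  = Gmx H x1 x2.
Proof.
apply/matrixP => r s; rewrite mul_delta_entry.
case: (mxtens_indexP r) => a0 c0; case: (mxtens_indexP s) => b0 c0'.
rewrite !mxE !summxE !mxtens_indexK /=.
under eq_bigr => a _ do rewrite summxE.
under eq_bigr => a _ do under eq_bigr => b _ do rewrite mxE tensmxE !mxE.
rewrite (bigD1 a0) //= [\sum_(i < d'.+1 | i != a0) _]big1 ?addr0; last first.
  by move=> a /negbTE ha; apply: big1 => b _; rewrite eq_sym ha /= mul0r mulr0.
rewrite (bigD1 b0) //= big1 ?addr0; last first.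
  by move=> b /negbTE hb; rewrite (eq_sym b0) hb andbF mul0r mulr0.
rewrite !eqxx /= mul1r -mulnb natrM rmorphM /= conjC_nat.
ring.
Qed.

Lemma adj_mul (C : numClosedFieldType) m n p (A : 'M[C]_(m,n)) (B : 'M[C]_(n,p)) :
  (A *m B)^t* = B^t* *m A^t*.
Proof. by rewrite trmx_mul map_mxM. Qed.

Lemma adj1 (C : numClosedFieldType) m : (1%:M : 'M[C]_m)^t* = 1%:M.
Proof. by rewrite trmx1 map_mx1. Qed.

Lemma castmx_conj (C : pzRingType) m m' (e : m = m') (A A' : 'M[C]_m) (M' : 'M[C]_m') :
  castmx (e,e) A *m M' *m castmx (e,e) A' = castmx (e,e) (A *m castmx (esym e, esym e) M' *m A').
Proof. by case: m' / e M'. Qed.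

Lemma castmx_sum (C : pzRingType) m m' n n' N (e : m = m') (f : n = n') (F : 'I_N -> 'M[C]_(m,n)) :
  castmx (e,f) (\sum_(j < N) F j) = \sum_(j < N) castmx (e,f) (F j).
Proof. by case: m' / e; case: n' / f. Qed.

Lemma castmxZ (C : pzRingType) m m' n n' (e : m = m') (f : n = n') c (A : 'M[C]_(m,n)) :
  castmx (e,f) (c *: A) = c *: castmx (e,f) A.
Proof. by case: m' / e; case: n' / f. Qed.

Lemma abstract_main (C : numClosedFieldType) d' D N (H : 'M[C]_(d'.+1))
  (e5 : (d'.+1 * (d'.+1 * D) = d'.+1 * d'.+1 * D)%N) (q : 'I_N -> C)
  (V : 'I_N -> 'M[C]_(d'.+1 * D)%N) (rho : 'M[C]_D) (sigma : 'M[C]_(d'.+1 * D)%N) :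
  H \is unitarymx -> (forall i j, H i j * (H i j)^* = (d'.+1%:R)^-1) ->
  (forall j, V j \is unitarymx) ->
  (forall phi : 'cV[C]_(d'.+1), (phi^t* *m phi) 0 0 = 1 -> Lam q V rho (phi *m phi^t*) = sigma) ->
  exists W : 'I_N -> 'M[C]_(d'.+1 * d'.+1 * D)%N, (forall j, W j \is unitarymx) /\
    forall x : 'I_(d'.+1 * d'.+1),
      \sum_(j < N) q j *: (W j *m (((delta_mx x 0 : 'cV[C]_(d'.+1 * d'.+1)) *m (delta_mx x 0 : 'cV[C]_(d'.+1 * d'.+1))^t*) *t rho) *m (W j)^t*)
      = castmx (e5, e5) (((d'.+1%:R)^-1)%:M *t sigma).
Proof.
move=> hHu hHe hV hP.
exists (fun j => castmx (e5, e5) (1%:M *t V j) *m (Bmx H *t 1%:M)); split.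
  move=> j; apply: mul_unitarymx.
    exact/castmx_unitary/tens_unitary/hV/unitary1.
  exact/tens_unitary/unitary1/B_unitary.
move=> x; case: (mxtens_indexP x) => x1 x2.
rewrite adj_delta mul_delta_mx.
have step : forall j,
  castmx (e5, e5) (1%:M *t V j) *m (Bmx H *t 1%:M) *m (delta_mx (mxtens_index (x1, x2)) (mxtens_index (x1, x2)) *t rho)
   *m (castmx (e5, e5) (1%:M *t V j) *m (Bmx H *t 1%:M))^t* =
  castmx (e5, e5) (\sum_(a < d'.+1) \sum_(b < d'.+1) (H a x1 * (H b x1)^*) *:
     (delta_mx a b *t (V j *m (delta_mx (a + x2) (b + x2) *t rho) *m (V j)^t*))).
  move=> j.
  rewrite adj_mul -castmx_adj !mulmxA -[_ *m (Bmx H *t 1%:M)^t*]mulmxA.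
  rewrite -[castmx _ _ *m _ *m (_ *m _)]mulmxA [_ *m (_ *m _ ^t*)]mulmxA.
  rewrite castmx_conj; congr (castmx _ _).
  rewrite adj_tens adj1 !tensmx_mul mulmx1 mul1mx BXB /Gmx.
  rewrite tensmx_suml castmx_sum mulmx_sumr mulmx_suml; apply: eq_bigr => a _.
  rewrite tensmx_suml castmx_sum mulmx_sumr mulmx_suml; apply: eq_bigr => b _.
  rewrite tensmxZl castmxZ -scalemxAr -scalemxAl; congr (_ *: _).
  rewrite -(@tensmxA _ _ _ _ _ _ _ _ _ _ e5 e5) castmxK adj_tens adj1 !tensmx_mul mulmx1 mul1mx.
  by [].
under eq_bigr => j _ do rewrite step.
rewrite -castmx_sumZ; congr (castmx _ _).
have hpol := @polar C N _ D q V rho sigma hP.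
transitivity (\sum_(a < d'.+1) \sum_(b < d'.+1) (H a x1 * (H b x1)^*) *:
   (delta_mx a b *t Lam q V rho (delta_mx (a + x2) (b + x2)))).
  rewrite /Lam.
  under [RHS]eq_bigr => a _ do under eq_bigr => b _ do
    rewrite tensmx_sumr scaler_sumr.
  under [RHS]eq_bigr => a _ do rewrite exchange_big /=.
  rewrite [RHS]exchange_big /=; apply: eq_bigr => j _.
  rewrite scaler_sumr; apply: eq_bigr => a _.
  rewrite scaler_sumr; apply: eq_bigr => b _.
  by rewrite tensmxZr !scalerA mulrC.
under eq_bigr => a _ do under eq_bigr => b _ do rewrite hpol (inj_eq (addIr x2)) tensmxZr scalerA.
rewrite (eq_bigr (fun a => (H a x1 * (H a x1)^*) *: (delta_mx a a *t sigma))); last first.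
  move=> a _; rewrite (bigD1 a) //= eqxx mulr1 big1 ?addr0 // => b hb.
  by rewrite eq_sym (negbTE hb) mulr0 scale0r.
under eq_bigr => a _ do rewrite hHe -tensmxZl.
rewrite -tensmx_suml; congr (_ *t _).
apply/matrixP => i j; rewrite !mxE summxE.
under eq_bigr => a _ do rewrite !mxE.
rewrite (bigD1 i) //= big1 ?addr0; last first.
  by move=> a /negbTE ha; rewrite eq_sym ha mulr0.
by rewrite eqxx /= eq_sym; case: (i == j); rewrite ?mulr1 ?mulr0.
Qed.


Lemma abstract_main' (C : numClosedFieldType) d D N (hd : (0 < d)%N) (H : 'M[C]_d)
  (e5 : (d * (d * D) = d * d * D)%N) (q : 'I_N -> C)
  (V : 'I_N -> 'M[C]_(d * D)%N) (rho : 'M[C]_D) (sigma : 'M[C]_(d * D)%N) :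
  H \is unitarymx -> (forall i j, H i j * (H i j)^* = (d%:R)^-1) ->
  (forall j, V j \is unitarymx) ->
  (forall phi : 'cV[C]_d, (phi ^t* *m phi) 0 0 = 1 -> Lam q V rho (phi *m phi ^t*) = sigma) ->
  exists W : 'I_N -> 'M[C]_(d * d * D)%N, (forall j, W j \is unitarymx) /\
    forall x : 'I_(d * d),
      \sum_(j < N) q j *: (W j *m (((delta_mx x 0 : 'cV[C]_(d * d)) *m (delta_mx x 0 : 'cV[C]_(d * d)) ^t*) *t rho) *m (W j) ^t*)
      = castmx (e5, e5) (((d%:R)^-1)%:M *t sigma).
Proof. case: d hd H e5 V sigma => // d' _ H e5 V sigma. exact: (@abstract_main C d' D N H e5 q V rho sigma). Qed.


Lemma castmx_delta2 (C : pzRingType) m m' (e : m = m') (i j : 'I_m) :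
  castmx (e, e) (delta_mx i j : 'M[C]_m) = delta_mx (cast_ord e i) (cast_ord e j).
Proof. by case: m' / e; rewrite castmx_id !cast_ord_id. Qed.

Lemma castmx_tensl (C : pzRingType) m m' n n' p q (e1 : m = m') (e2 : n = n')
  (f : ((m * p = m' * p)%N * (n * q = n' * q)%N)%type)
  (A : 'M[C]_(m,n)) (B : 'M[C]_(p,q)) :
  castmx (e1,e2) A *t B = castmx f (A *t B).
Proof.
case: m' / e1 f; case: n' / e2 => f.
by rewrite (@castmx_pi _ _ _ _ _ f (erefl, erefl)) !castmx_id.
Qed.

Lemma castmx_tensr (C : pzRingType) m n p p' q q' (e3 : p = p') (e4 : q = q')
  (f : ((m * p = m * p')%N * (n * q = n * q')%N)%type)
  (A : 'M[C]_(m,n)) (B : 'M[C]_(p,q)) :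
  A *t castmx (e3,e4) B = castmx f (A *t B).
Proof.
case: p' / e3 f; case: q' / e4 => f.
by rewrite (@castmx_pi _ _ _ _ _ f (erefl, erefl)) !castmx_id.
Qed.

Lemma castmx_conj2 (C : numClosedFieldType) m m' (e : m = m') (A M : 'M[C]_m) :
  castmx (e,e) A *m castmx (e,e) M *m (castmx (e,e) A)^t* = castmx (e,e) (A *m M *m A^t*).
Proof. by case: m' / e. Qed.

Local Open Scope complex_scope.

Theorem theorem6 (R : realType) (n k N : nat) (hn : (1 <= n)%N)
    (p : 'I_N -> R) (U : 'I_N -> 'M[R[i]]_(2 ^ (n + k)))
    (rho_a : 'M[R[i]]_(2 ^ k)) (rho_0 : 'M[R[i]]_(2 ^ (n + k))) :
  (forall j, 0 <= p j) ->
  \sum_(j < N) p j = 1 ->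
  (forall j, U j \is unitarymx) ->
  density rho_a ->
  density rho_0 ->
  PQC (all_pure_states n) p U rho_a rho_0 ->
  exists U' : 'I_N -> 'M[R[i]]_(2 ^ ((n + n) + k)),
    (forall j, U' j \is unitarymx) /\
    PQC (first_basis_states (n + n) (2 ^ (n + n))) p U' rho_a
      (castmx (congr1 (expn 2) (addnA n n k), congr1 (expn 2) (addnA n n k))
         (qtens (normalized_id (2 ^ n)) rho_0)).
Proof.
move=> _ _ hU _ _ hP.

have [H [hHu hHe]] := hadamard (R[i]) n.
pose V j := castmx (expnD 2 n k, expnD 2 n k) (U j).
pose sigma := castmx (expnD 2 n k, expnD 2 n k) rho_0.
have e5 : (2 ^ n * (2 ^ n * 2 ^ k) = 2 ^ n * 2 ^ n * 2 ^ k)%N := mulnA _ _ _.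
have hd : (0 < 2 ^ n)%N by rewrite expn_gt0.
have hV : forall j, V j \is unitarymx by move=> j; apply: castmx_unitary.
have hL : forall phi : 'cV[R[i]]_(2 ^ n), (phi ^t* *m phi) 0 0 = 1 ->
    Lam (fun j => (p j)%:C) V rho_a (phi *m phi ^t*) = sigma.
  move=> phi hphi; rewrite /Lam /sigma.
  have := hP phi hphi; rewrite /qtens /adj => <-.
  rewrite castmx_sumZ; apply: eq_bigr => j _; congr (_ *: _).
  by rewrite !castmx_mulsq castmxKV castmx_adj.
have [W [hW hWx]] := @abstract_main' _ _ _ _ hd H e5 _ V rho_a sigma hHu hHe hV hL.
have E3 : (2 ^ ((n + n) + k) = 2 ^ n * 2 ^ n * 2 ^ k)%N by rewrite !expnD.
exists (fun j => castmx (esym E3, esym E3) (W j)); split.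
  by move=> j; apply: castmx_unitary.
move=> phi [i [_ ->]].
have hW0 := hWx (cast_ord (expnD 2 n n) i).
rewrite /qtens /adj !adj_delta !mul_delta_mx in hW0 *.
have E : (2 ^ (n + n) * 2 ^ k = 2 ^ n * 2 ^ n * 2 ^ k)%N by rewrite expnD.
have hx : castmx (esym (expnD 2 (n + n) k), esym (expnD 2 (n + n) k)) (delta_mx i i *t rho_a)
   = castmx (esym E3, esym E3) (delta_mx (cast_ord (expnD 2 n n) i) (cast_ord (expnD 2 n n) i) *t rho_a).
  rewrite -castmx_delta2 (@castmx_tensl _ _ _ _ _ _ _ _ _ (E, E)) castmx_comp.
  exact: castmx_pi.
rewrite hx.
under eq_bigr => j _ do rewrite castmx_conj2.
rewrite -castmx_sumZ hW0.
rewrite castmx_comp -(castmxK (expnD 2 n k) (expnD 2 n k) rho_0) -/sigma /normalized_id.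
have F : (2 ^ n * 2 ^ (n + k) = 2 ^ n * (2 ^ n * 2 ^ k))%N by rewrite expnD.
rewrite (@castmx_tensr _ _ _ _ _ _ _ _ _ (F, F)) !castmx_comp.
rewrite (@castmx_pi _ _ _ _ _ (etrans (expnD 2 n k) (esym (expnD 2 n k)), etrans (expnD 2 n k) (esym (expnD 2 n k))) (erefl, erefl)) castmx_id.
exact: castmx_pi.
Qed.
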